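(* Let $G$ be a graph and $c:V(G)\to\{0,1\}$ a coloring that is strongly maximal in some set $A'\subseteq V(G)$. If $A\supseteq A'$ is a set of vertices such that $A\setminus A'$ contains only finitely many vertices of finite degree, then $c$ is almost strongly maximal in $A$.
   Context: Graphs are simple, undirected, possibly infinite; degree of $v$ is $|N(v)|$. A coloring is a map $c:V(G)\to\{0,1\}$. $\mathit{trans}(c)=\{uv\in E(G):c(u)\neq c(v)\}$; $c*F$ is the coloring differing from $c$ exactly on $F$; for finite $F$ consisting of vertices of finite degree, $\mathit{dtrans}(c,F)=|\mathit{trans}(c)\setminus\mathit{trans}(c*F)|-|\mathit{trans}(c*F)\setminus\mathit{trans}(c)|$. $c$ is strongly maximal in $A$ if $\mathit{dtrans}(c,F)\ge0$ for every finite $F\subseteq A$ consisting of vertices of finite degree. Colorings $c,c'$ are close in $A$ if $c\triangle c'=\{v:c(v)\neq c'(v)\}$ is finite, consists only of vertices of finite degree, and is contained in $A$. $c$ is almost strongly maximal in $A$ if it is close in $A$ to a coloring that is strongly maximal in $A$. *)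

(* Defs.v *)
From HB Require Import structures.
From mathcomp Require Import all_boot all_order all_algebra.
From mathcomp Require Import boolp classical_sets cardinality.
Set Implicit Arguments. Unset Strict Implicit. Unset Printing Implicit Defensive.
Import Order.TTheory GRing.Theory Num.Theory.
Local Open Scope classical_set_scope.

(* An (undirected) edge uv is represented as the unordered pair [set u; v]. *)

Definition simple_graph (V : Type) (adj : V -> V -> Prop) : Prop :=
  (forall u v, adj u v -> adj v u) /\ (forall v, ~ adj v v).

Definition nbhd (V : Type) (adj : V -> V -> Prop) (v : V) : set V :=
  [set u | adj v u].

Definition fin_deg (V : Type) (adj : V -> V -> Prop) (v : V) : Prop :=
  finite_set (nbhd adj v).

Definition trans (V : Type) (adj : V -> V -> Prop) (c : V -> bool)
  : set (set V) :=
  [set e | exists u v, [/\ adj u v, e = [set u; v] & c u != c v]].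

(* c * F : the coloring differing from c exactly on F *)
Definition flip (V : Type) (c : V -> bool) (F : set V) : V -> bool :=
  fun v => if pselect (F v) then ~~ c v else c v.

(* the unique n with A in bijection with `I_n = {0,...,n-1}; 0 if A infinite *)
Definition ncard (T : Type) (A : set T) : nat :=
  xget 0%N [set n : nat | (A #= `I_n)%card].

(* dtrans(c,F) = |trans(c) \ trans(c*F)| - |trans(c*F) \ trans(c)|
   (meaningful for finite F consisting of vertices of finite degree) *)
Definition dtrans (V : Type) (adj : V -> V -> Prop) (c : V -> bool)
  (F : set V) : int :=
  ((ncard (trans adj c `\` trans adj (flip c F)))%:Z -
   (ncard (trans adj (flip c F) `\` trans adj c))%:Z)%R.

Definition strongly_maximal (V : Type) (adj : V -> V -> Prop)
  (c : V -> bool) (A : set V) : Prop :=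
  forall F : set V, finite_set F -> F `<=` A -> F `<=` fin_deg adj ->
    (0 <= dtrans adj c F)%R.

Definition diffset (V : Type) (c c' : V -> bool) : set V :=
  [set v | c v != c' v].

Definition close_in (V : Type) (adj : V -> V -> Prop)
  (c c' : V -> bool) (A : set V) : Prop :=
  [/\ finite_set (diffset c c'), diffset c c' `<=` fin_deg adj
    & diffset c c' `<=` A].

Definition almost_strongly_maximal (V : Type) (adj : V -> V -> Prop)
  (c : V -> bool) (A : set V) : Prop :=
  exists c' : V -> bool, close_in adj c c' A /\ strongly_maximal adj c' A.

(* Main.v *)
Require Import Defs.
From HB Require Import structures.
From mathcomp Require Import all_boot all_order all_algebra.
From mathcomp Require Import boolp classical_sets cardinality.
From mathcomp Require Import finmap.
From mathcomp Require Import zify.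
Local Open Scope classical_set_scope.

Lemma ncard_fset {T : choiceType} {A : set T} : finite_set A ->
  ncard A = #|` fset_set A|%fset.
Proof.
move=> fA; rewrite /ncard.
have := @xgetPex _ 0%N [set n : nat | (A #= `I_n)%card] fA.
by move=> /card_fset_set ->.
Qed.

Lemma ncardU (T : choiceType) (A B : set T) : finite_set A -> finite_set B ->
  A `&` B = set0 -> ncard (A `|` B) = (ncard A + ncard B)%N.
Proof.
move=> fA fB AB0; have fU : finite_set (A `|` B) by rewrite finite_setU.
rewrite (ncard_fset fU) (ncard_fset fA) (ncard_fset fB).
rewrite fset_setU // cardfsU -fset_setI // AB0 fset_set0 cardfs0 subn0 //.
Qed.

Lemma ncard_le (T : choiceType) (A B : set T) : finite_set B -> A `<=` B ->
  (ncard A <= ncard B)%N.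
Proof.
move=> fB AB.
have fA : finite_set A by exact: sub_finite_set fB.
rewrite !ncard_fset //; apply: fsubset_leq_card.
by rewrite -fset_set_sub.
Qed.

Import GRing.Theory Num.Theory.

Lemma diff_count (T : choiceType) (X Y K : set T) : finite_set K ->
  X `\` Y `<=` K -> Y `\` X `<=` K ->
  ((ncard (X `\` Y))%:Z - (ncard (Y `\` X))%:Z =
   (ncard (X `&` K))%:Z - (ncard (Y `&` K))%:Z)%R.
Proof.
move=> fK hXY hYX.
have fXY : finite_set (X `\` Y) by exact: sub_finite_set fK.
have fYX : finite_set (Y `\` X) by exact: sub_finite_set fK.
have fI : finite_set (X `&` Y `&` K) by apply: sub_finite_set fK => x [].
have e1 : X `&` K = (X `\` Y) `|` (X `&` Y `&` K).
  apply/seteqP; split => x /=.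
    move=> [hx hk]; case: (pselect (Y x)) => hy; [right|left]; by [].
  by move=> [[hx hy]|[[hx hy] hk]]; split => //; apply: hXY.
have e2 : Y `&` K = (Y `\` X) `|` (X `&` Y `&` K).
  apply/seteqP; split => x /=.
    move=> [hx hk]; case: (pselect (X x)) => hy; [right|left]; by [].
  by move=> [[hx hy]|[[hx hy] hk]]; split => //; apply: hYX.
have d1 : (X `\` Y) `&` (X `&` Y `&` K) = set0.
  by apply/seteqP; split => x //= [[_ hy] [[_ hy'] _]].
have d2 : (Y `\` X) `&` (X `&` Y `&` K) = set0.
  by apply/seteqP; split => x //= [[_ hy] [[hy' _] _]].
rewrite e1 e2 !ncardU //.
rewrite !PoszD; lia.
Qed.

Section Graph.
Variables (V : Type) (adj : V -> V -> Prop).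
Hypothesis adj_sym : forall u v, adj u v -> adj v u.

Definition E (S : set V) : set (set V) :=
  [set e | exists u v, [/\ adj u v, e = [set u; v] & S u]].

Lemma E_mono (S S' : set V) : S `<=` S' -> E S `<=` E S'.
Proof. by move=> h e [u [v [huv -> hu]]]; exists u, v; split => //; apply: h. Qed.

Lemma finite_E (S : set V) : finite_set S -> S `<=` fin_deg adj ->
  finite_set (E S).
Proof.
move=> fS hS.
apply: (@sub_finite_set _ _ (\bigcup_(u in S) ((fun v => [set u; v]) @` nbhd adj u))).
  by move=> e [u [v [huv -> hu]]]; exists u => //; exists v.
apply: bigcup_finite => // u hu; apply: finite_image; exact: hS.
Qed.

Lemma trans_local (S : set V) (d d' : V -> bool) :
  (forall x, ~ S x -> d x = d' x) -> trans adj d `\` trans adj d' `<=` E S.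
Proof.
move=> hd e [[u [v [huv -> hneq]]] hn].
case: (pselect (S u)) => hu; first by exists u, v.
case: (pselect (S v)) => hv.
  by exists v, u; split => //; [apply: adj_sym | rewrite setUC].
exfalso; apply: hn; exists u, v; split => //.
by rewrite -!hd.
Qed.

Lemma flip_out (d : V -> bool) (S : set V) x : ~ S x -> d x = flip d S x.
Proof. by move=> hx; rewrite /flip; case: pselect. Qed.

Lemma dtrans_cnt (S : set V) (d : V -> bool) (K : set (set V)) :
  finite_set K -> E S `<=` K ->
  dtrans adj d S = ((ncard (trans adj d `&` K))%:Z -
     (ncard (trans adj (flip d S) `&` K))%:Z)%R.
Proof.
move=> fK hK; rewrite /dtrans; apply: diff_count => //.
  apply: subset_trans hK; apply: trans_local => x hx; exact: flip_out.
apply: subset_trans hK; apply: trans_local => x hx; symmetry; exact: flip_out.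
Qed.

Definition symd (F G : set V) := (F `\` G) `|` (G `\` F).

Lemma flip_flip (d : V -> bool) F G : flip (flip d F) G = flip d (symd F G).
Proof.
apply: funext => x; rewrite /flip /symd.
case: (pselect (G x)) => hg; case: (pselect (F x)) => hf;
  case: pselect => /= h; rewrite ?negbK //; exfalso.
- by case: h => [[]|[]].
- by apply: h; right.
- by apply: h; left.
- by case: h => [[]|[]].
Qed.

Lemma flip0 (d : V -> bool) : flip d set0 = d.
Proof. by apply: funext => x; rewrite /flip; case: pselect. Qed.

Lemma cocycle (d : V -> bool) F G :
  finite_set F -> finite_set G -> F `<=` fin_deg adj -> G `<=` fin_deg adj ->
  dtrans adj d (symd F G) = (dtrans adj d F + dtrans adj (flip d F) G)%R.
Proof.
move=> fF fG hF hG.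
have fFG : finite_set (F `|` G) by rewrite finite_setU.
have hFG : F `|` G `<=` fin_deg adj by move=> x [/hF|/hG].
have fK := @finite_E _ fFG hFG.
rewrite (@dtrans_cnt _ _ _ fK); last by apply: E_mono => x [[]|[]]; [left|right].
rewrite (@dtrans_cnt F _ _ fK); last by apply: E_mono => x; left.
rewrite (@dtrans_cnt G _ _ fK); last by apply: E_mono => x; right.
rewrite flip_flip; lia.
Qed.

End Graph.

Theorem corollary2p4 (V : Type) (adj : V -> V -> Prop) (c : V -> bool)
  (A' A : set V) :
  simple_graph adj ->
  strongly_maximal adj c A' ->
  A' `<=` A ->
  finite_set ((A `\` A') `&` fin_deg adj) ->
  almost_strongly_maximal adj c A.
Proof.
move=> [asym airr] hmax hAA' fB.
set B := (A `\` A') `&` fin_deg adj in fB.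
have Bfd : B `<=` fin_deg adj by move=> x [].
have fEB := @finite_E V adj B fB Bfd.
pose M := ncard (E V adj B).
pose P (F : set V) := [/\ finite_set F, F `<=` A & F `<=` fin_deg adj].
have bound : forall F, P F -> (- dtrans adj c F <= M%:Z)%R.
  move=> F [fF FA Ffd].
  pose F2 := F `&` A'; pose F1 := F `\` A'.
  have eF : symd V F2 F1 = F.
    rewrite /symd /F2 /F1; apply/seteqP; split => x /=.
      by move=> [[[hx _] _]|[[hx _] _]].
    move=> hx; case: (pselect (A' x)) => ha; [left|right]; split => //.
      by move=> [].
    by move=> [].
  have fF2 : finite_set F2 by apply: (sub_finite_set _ fF) => x [].
  have fF1 : finite_set F1 by apply: (sub_finite_set _ fF) => x [].
  have hF2 : F2 `<=` fin_deg adj by move=> x [/Ffd].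
  have hF1 : F1 `<=` fin_deg adj by move=> x [/Ffd].
  rewrite -eF (@cocycle V adj asym c _ _ fF2 fF1 hF2 hF1).
  have h2 : (0 <= dtrans adj c F2)%R by apply: hmax => // x [].
  have F1B : F1 `<=` B by move=> x [hx ha]; split; [split=> //; apply: FA|apply: Ffd].
  rewrite (@dtrans_cnt V adj asym F1 (flip c F2) _ fEB (@E_mono V adj _ _ F1B)).
  have H : (ncard (trans adj (flip (flip c F2) F1) `&` E V adj B) <= M)%N :=
    @ncard_le _ _ _ fEB (@subIsetr _ _ _).
  lia.
pose Q n := `[< exists F, P F /\ (- dtrans adj c F = n%:Z)%R >].
have exQ : exists n, Q n.
  exists 0%N; apply/asboolP; exists set0; split.
    by split; [exact: finite_set0|exact: sub0set|exact: sub0set].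
  rewrite (@dtrans_cnt V adj asym set0 c _ fEB (@E_mono V adj _ _ (sub0set B))) (@flip0 V).
  lia.
have ubQ : forall n, Q n -> (n <= M)%N.
  move=> n /asboolP [F [PF hF]]; have := bound F PF; rewrite hF; lia.
case: (ex_maxnP exQ ubQ) => n /asboolP [F [[fF FA Ffd] hF]] hmaxn.
have dF : diffset c (flip c F) `<=` F.
  by move=> x; rewrite /diffset /flip /=; destruct (pselect (F x)) as [h|h] => //; rewrite eqxx.
exists (flip c F); split.
  split; first exact: (sub_finite_set dF fF).
  - by move=> x /dF /Ffd.
  - by move=> x /dF /FA.
move=> G fG GA Gfd.
have PS : P (symd V F G).
  split.
  - by apply: (@sub_finite_set _ _ (F `|` G)); [move=> x [[]|[]]; [left|right]|rewrite finite_setU].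
  - by move=> x [[/FA]|[/GA]].
  - by move=> x [[/Ffd]|[/Gfd]].
have co := @cocycle V adj asym c _ _ fF fG Ffd Gfd.
have : (- dtrans adj c (symd V F G) <= n%:Z)%R.
  case E0: (- dtrans adj c (symd V F G))%R => [m|m].
    have : Q m by apply/asboolP; exists (symd V F G).
    move/hmaxn; lia.
  lia.
lia.
Qed.
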